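(* Let $\Gamma$ be a gain operator on $\ell^\infty_+(\mathcal I)$. Assume there exists a path $\sigma:\mathbb R_+\to\ell^\infty_+(\mathcal I)$ which is continuous (in norm) and increasing (i.e. $r_1\le r_2\Rightarrow \sigma(r_1)\le\sigma(r_2)$), and which satisfies: (i) there is $\rho\in\mathcal K_\infty$ with $\Gamma_\rho(\sigma(r))\le\sigma(r)$ for all $r\ge 0$; (ii) there are $\varphi_{\min},\varphi_{\max}\in\mathcal K_\infty$ with $\varphi_{\min}(r)\mathbf 1\le\sigma(r)\le\varphi_{\max}(r)\mathbf 1$ for all $r\ge0$. Then there exists a path of strict decay for $\Gamma$.
   Context: Let $\mathcal I$ be a nonempty countable index set. $\ell^\infty(\mathcal I)$ is the Banach space of real families $s=(s_i)_{i\in\mathcal I}$ with $\|s\|:=\sup_i|s_i|<\infty$, and $\ell^\infty_+(\mathcal I):=\{s\in\ell^\infty(\mathcal I):s_i\ge0\ \forall i\}$. We write $s^1\le s^2$ iff $s^1_i\le s^2_i$ for all $i$, and $s^1\ll s^2$ iff $\inf_i(s^2_i-s^1_i)>0$. $\mathbf 1$ is the vector with all entries $1$. $\mathcal K$ is the set of continuous strictly increasing $\gamma:\mathbb R_+\to\mathbb R_+$ with $\gamma(0)=0$, and $\mathcal K_\infty$ the set of unbounded $\gamma\in\mathcal K$. A function $\varphi\in\mathcal K_\infty$ acts on $\ell^\infty_+(\mathcal I)$ componentwise: $\varphi(s):=(\varphi(s_i))_i$. For $\mathcal J\subset\mathcal I$ and $s\in\ell^\infty_+(\mathcal I)$, $s_{|\mathcal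 J}$ is the vector agreeing with $s$ on $\mathcal J$ and equal to $0$ elsewhere. Gain operator: for each $i\in\mathcal I$ let $\mathcal I_i\subset\mathcal I\setminus\{i\}$ be a finite (possibly empty) set; $\mathcal G$ is the directed graph with vertex set $\mathcal I$ and edges $ji$ for $i\in\mathcal I$, $j\in\mathcal I_i$. Let $\gamma_{ij}\in\mathcal K_\infty$ ($ji\in E(\mathcal G)$) be a pointwise equicontinuous family (for all $r_0\ge0,\varepsilon>0$ there is $\delta>0$ with $|\gamma_{ij}(r)-\gamma_{ij}(r_0)|\le\varepsilon$ whenever $|r-r_0|\le\delta$, for all edges $ji$). Let $\mu_i:\ell^\infty_+(\mathcal I)\to[0,\infty]$, $i\in\mathcal I$, satisfy: (M1) there is $\xi\in\mathcal K_\infty$ with $\mu_i(0)=0$ and $\mu_i(s)\ge\xi(\|s\|)$ for all $s,i$; (M2) $0\le s^1\le s^2\Rightarrow\mu_i(s^1)\le\mu_i(s^2)$; (M3) for every finite $\mathcal J\subset\mathcal I$ and every $i$, the restriction of $\mu_i$ to $\{s: s_k=0\ \forall k\notin\mathcal J\}$ is finite-valued and continuous; (M4) for every norm-bounded $A\subset\ell^\infty_+(\mathcal I)$ and $\varepsilon>0$ there is $\delta>0$ such that for all $s^0\in A$ and $s\in\ell^\infty_+(\mathcal I)$ with $\|s-s^0\|\le\delta$ we have $\sup_i|\mu_i(s_{|\mathcal I_i})-\mu_i(s^0_{|\mathcal I_i})|\le\varepsilon$. The gain operator is $\Gamma:\ell^\infty_+(\mathcal I)\to\ell^\infty_+(\mathcal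 I)$, $\Gamma_i(s):=\mu_i([\gamma_{ij}(s_j)]_{j\in\mathcal I_i})$, where the argument is the vector with entries $\gamma_{ij}(s_j)$ at $j\in\mathcal I_i$ and $0$ elsewhere. For $\rho\in\mathcal K_\infty$, $\Gamma_\rho:=(\mathrm{id}+\rho)\circ\Gamma$. A path of strict decay for $\Gamma$ is a map $\sigma:\mathbb R_+\to\ell^\infty_+(\mathcal I)$ such that: (i) there is $\rho\in\mathcal K_\infty$ with $\Gamma_\rho(\sigma(r))\le\sigma(r)$ for all $r\ge0$; (ii) there are $\varphi_{\min},\varphi_{\max}\in\mathcal K_\infty$ with $\varphi_{\min}(r)\mathbf 1\le\sigma(r)\le\varphi_{\max}(r)\mathbf 1$ for all $r\ge0$; (iii) each component $\sigma_i$ is a $\mathcal K_\infty$-function; (iv) for every compact interval $K\subset(0,\infty)$ there are $0<l\le L$ with $l|r_1-r_2|\le|\sigma_i^{-1}(r_1)-\sigma_i^{-1}(r_2)|\le L|r_1-r_2|$ for all $r_1,r_2\in K$, $i\in\mathcal I$. *)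

(* Defs.v *)
From Stdlib Require Import Reals Lra List ClassicalDescription.
From Coquelicot Require Import Coquelicot.
Open Scope R_scope.

(** * Comparison functions on R_+ (functions R -> R, only values on [0,oo) matter) *)

Definition cont_on_Rplus (f : R -> R) : Prop :=
  forall x, 0 <= x -> forall eps, 0 < eps -> exists delta, 0 < delta /\
    forall y, 0 <= y -> Rabs (y - x) < delta -> Rabs (f y - f x) < eps.

Definition is_K (g : R -> R) : Prop :=
  cont_on_Rplus g /\ g 0 = 0 /\
  (forall x, 0 <= x -> 0 <= g x) /\
  (forall x y, 0 <= x -> x < y -> g x < g y).

Definition is_Kinf (g : R -> R) : Prop :=
  is_K g /\ (forall M, exists x, 0 <= x /\ M < g x).

Definition bounded_fam {I : Type} (s : I -> R) : Prop :=
  exists C, forall i, Rabs (s i) <= C.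

Definition in_linf_plus {I : Type} (s : I -> R) : Prop :=
  (forall i, 0 <= s i) /\ bounded_fam s.

(** sup-norm ||s|| = sup_i |s_i| (meaningful for bounded s, I nonempty) *)
Definition linf_norm {I : Type} (s : I -> R) : R :=
  real (Lub_Rbar (fun x => exists i, x = Rabs (s i))).

Definition vsub {I : Type} (s1 s2 : I -> R) : I -> R := fun i => s1 i - s2 i.

Definition vle {I : Type} (s1 s2 : I -> R) : Prop := forall i, s1 i <= s2 i.

Definition restr {I : Type} (J : list I) (s : I -> R) : I -> R :=
  fun k => if excluded_middle_informative (In k J) then s k else 0.

Definition zero_vec {I : Type} : I -> R := fun _ => 0.

Definition countable_nonempty (I : Type) : Prop :=
  inhabited I /\ exists f : I -> nat, forall x y, f x = f y -> x = y.

(** argument of mu_i: entries gamma_ij(s_j) at j in I_i, 0 elsewhere *)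
Definition gain_arg {I : Type} (Ii : I -> list I) (gam : I -> I -> R -> R)
  (i : I) (s : I -> R) : I -> R :=
  fun k => if excluded_middle_informative (In k (Ii i)) then gam i k (s k) else 0.

(** Gamma_i(s) := mu_i([gamma_ij(s_j)]_{j in I_i}) (real-valued by (M3)) *)
Definition Gamma {I : Type} (Ii : I -> list I) (gam : I -> I -> R -> R)
  (mu : I -> (I -> R) -> Rbar) (s : I -> R) : I -> R :=
  fun i => real (mu i (gain_arg Ii gam i s)).

Definition Gamma_rho {I : Type} (Ii : I -> list I) (gam : I -> I -> R -> R)
  (mu : I -> (I -> R) -> Rbar) (rho : R -> R) (s : I -> R) : I -> R :=
  fun i => Gamma Ii gam mu s i + rho (Gamma Ii gam mu s i).

Definition gain_operator_data {I : Type} (Ii : I -> list I)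
  (gam : I -> I -> R -> R) (mu : I -> (I -> R) -> Rbar) : Prop :=
  (* I_i is a finite subset of I \ {i} *)
  (forall i, ~ In i (Ii i)) /\
  (forall i j, In j (Ii i) -> is_Kinf (gam i j)) /\
  (forall r0, 0 <= r0 -> forall eps, 0 < eps -> exists delta, 0 < delta /\
     forall i j, In j (Ii i) -> forall r, 0 <= r -> Rabs (r - r0) <= delta ->
       Rabs (gam i j r - gam i j r0) <= eps) /\
  (forall i s, in_linf_plus s -> Rbar_le (Finite 0) (mu i s)) /\
  (exists xi, is_Kinf xi /\
     forall i, mu i zero_vec = Finite 0 /\
       forall s, in_linf_plus s -> Rbar_le (Finite (xi (linf_norm s))) (mu i s)) /\
  (forall i s1 s2, in_linf_plus s1 -> in_linf_plus s2 -> vle s1 s2 ->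
     Rbar_le (mu i s1) (mu i s2)) /\
  (forall (J : list I) i,
     let V := fun s => in_linf_plus s /\ forall k, ~ In k J -> s k = 0 in
     (forall s, V s -> is_finite (mu i s)) /\
     (forall s0, V s0 -> forall eps, 0 < eps -> exists delta, 0 < delta /\
        forall s, V s -> linf_norm (vsub s s0) < delta ->
          Rabs (real (mu i s) - real (mu i s0)) < eps)) /\
  (forall (A : (I -> R) -> Prop),
     (forall s, A s -> in_linf_plus s) ->
     (exists C, forall s, A s -> linf_norm s <= C) ->
     forall eps, 0 < eps -> exists delta, 0 < delta /\
       forall s0 s, A s0 -> in_linf_plus s -> linf_norm (vsub s s0) <= delta ->
         forall i, Rbar_le
           (Rbar_abs (Rbar_minus (mu i (restr (Ii i) s)) (mu i (restr (Ii i) s0))))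
           (Finite eps)) /\
  (forall s, in_linf_plus s -> in_linf_plus (Gamma Ii gam mu s)).

Definition path_of_strict_decay {I : Type} (Ii : I -> list I)
  (gam : I -> I -> R -> R) (mu : I -> (I -> R) -> Rbar) (sigma : R -> I -> R) : Prop :=
  (forall r, 0 <= r -> in_linf_plus (sigma r)) /\
  (exists rho, is_Kinf rho /\
     forall r, 0 <= r -> vle (Gamma_rho Ii gam mu rho (sigma r)) (sigma r)) /\
  (exists phimin phimax, is_Kinf phimin /\ is_Kinf phimax /\
     forall r, 0 <= r -> forall i, phimin r <= sigma r i <= phimax r) /\
  (forall i, is_Kinf (fun r => sigma r i)) /\
  (* (iv): sigma_i^{-1} bi-Lipschitz on compact K = [a,b] in (0,oo), uniformly in i;
     sigma_i^{-1}(r_k) = t_k is expressed by t_k >= 0 /\ sigma_i(t_k) = r_k *)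
  (forall a b, 0 < a -> a <= b -> exists l L, 0 < l /\ l <= L /\
     forall i r1 r2 t1 t2, a <= r1 <= b -> a <= r2 <= b ->
       0 <= t1 -> 0 <= t2 -> sigma t1 i = r1 -> sigma t2 i = r2 ->
       l * Rabs (r1 - r2) <= Rabs (t1 - t2) <= L * Rabs (r1 - r2)).

(* Main.v *)
Require Import Defs.
From Stdlib Require Import Reals Lra List Classical ClassicalEpsilon ZArith Lia.
From Stdlib Require Import ClassicalDescription FunctionalExtensionality.
From Coquelicot Require Import Coquelicot.
Open Scope R_scope.

Lemma K_mono g : is_K g -> forall x y, 0 <= x -> x <= y -> g x <= g y.
Proof.
  intros [_ [_ [_ H]]] x y Hx Hxy. destruct (Rle_lt_or_eq_dec _ _ Hxy) as [h|h].
  - left. apply H; auto.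
  - subst; lra.
Qed.

Lemma K_nonneg g : is_K g -> forall x, 0 <= x -> 0 <= g x.
Proof. intros [_ [_ [H _]]]; auto. Qed.

Lemma K_pos g : is_K g -> forall x, 0 < x -> 0 < g x.
Proof. intros Hg x Hx. destruct Hg as [_ [H0 [_ H]]]. rewrite <- H0. apply H; lra. Qed.

Lemma K_zero g : is_K g -> g 0 = 0.
Proof. intros [_ [H _]]; auto. Qed.

Definition glb (E : R -> Prop) : R := real (Glb_Rbar E).

Lemma glb_fin E m y0 : E y0 -> (forall y, E y -> m <= y) -> Glb_Rbar E = Finite (glb E).
Proof.
  intros Hy0 Hm. unfold glb. destruct (Glb_Rbar_correct E) as [H1 H2].
  assert (A : Rbar_le (Glb_Rbar E) y0) by (apply H1; auto).
  assert (B : Rbar_le m (Glb_Rbar E)) by (apply H2; intros x Hx; simpl; apply Hm; auto).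
  destruct (Glb_Rbar E); simpl in *; auto; contradiction.
Qed.

Lemma glb_le E m y : (forall y, E y -> m <= y) -> E y -> glb E <= y.
Proof.
  intros Hm Hy. pose proof (glb_fin E m y Hy Hm) as F.
  destruct (Glb_Rbar_correct E) as [H1 _]. specialize (H1 y Hy). rewrite F in H1. exact H1.
Qed.

Lemma glb_ge E m y0 : E y0 -> (forall y, E y -> m <= y) -> m <= glb E.
Proof.
  intros Hy Hm. pose proof (glb_fin E m y0 Hy Hm) as F.
  destruct (Glb_Rbar_correct E) as [_ H2].
  assert (B : Rbar_le m (Glb_Rbar E)) by (apply H2; intros x Hx; simpl; apply Hm; auto).
  rewrite F in B. exact B.
Qed.

Lemma glb_approx E m y0 eps : E y0 -> (forall y, E y -> m <= y) -> 0 < eps ->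
  exists y, E y /\ y < glb E + eps.
Proof.
  intros Hy Hm He. apply NNPP; intro Hn.
  assert (glb E + eps <= glb E).
  { apply (glb_ge E _ y0 Hy). intros y Ey. apply Rnot_lt_le. intro Hlt. apply Hn. exists y; auto. }
  lra.
Qed.

Lemma linf_norm_comp {I : Type} (s : I -> R) : bounded_fam s -> forall i, Rabs (s i) <= linf_norm s.
Proof.
  intros [C HC] i. unfold linf_norm.
  set (E := fun x => exists i, x = Rabs (s i)).
  destruct (Lub_Rbar_correct E) as [H1 H2].
  assert (A : Rbar_le (Rabs (s i)) (Lub_Rbar E)) by (apply H1; exists i; auto).
  assert (B : Rbar_le (Lub_Rbar E) C) by (apply H2; intros x [j ->]; simpl; auto).
  destruct (Lub_Rbar E); simpl in *; auto; contradiction.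
Qed.
Lemma Kinf_scale g c : is_Kinf g -> 0 < c -> is_Kinf (fun x => c * g x).
Proof.
  intros [[Hc [H0 [Hn Hs]]] Hu] Hcpos. split; [split; [|split; [|split]]|].
  - intros x Hx eps He. destruct (Hc x Hx (eps / c)) as [d [Hd P]]. apply Rdiv_lt_0_compat; lra.
    exists d. split; auto. intros y Hy Hyx. specialize (P y Hy Hyx).
    replace (c * g y - c * g x) with (c * (g y - g x)) by ring. rewrite Rabs_mult, (Rabs_right c) by lra.
    apply Rmult_lt_reg_l with (/ c). apply Rinv_0_lt_compat; lra.
    rewrite <- Rmult_assoc, Rinv_l by lra. replace (/ c * eps) with (eps / c) by (unfold Rdiv; ring). lra.
  - rewrite H0; ring.
  - intros. apply Rmult_le_pos; [lra|auto].
  - intros. apply Rmult_lt_compat_l; auto.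
  - intros M. destruct (Hu (M / c)) as [x [Hx HM]]. exists x. split; auto.
    apply Rmult_lt_reg_l with (/ c). apply Rinv_0_lt_compat; lra.
    rewrite <- Rmult_assoc, Rinv_l by lra. replace (/ c * M) with (M / c) by (unfold Rdiv; ring). lra.
Qed.

Lemma fin_bounded {I : Type} (J : list I) (g : I -> R) :
  bounded_fam (fun k => if excluded_middle_informative (In k J) then g k else 0).
Proof.
  exists (fold_right (fun k acc => Rabs (g k) + acc) 0 J).
  assert (Hpos : forall J0, 0 <= fold_right (fun k acc => Rabs (g k) + acc) 0 J0).
  { induction J0; simpl. lra. pose proof (Rabs_pos (g a)). lra. }
  intro k. destruct (excluded_middle_informative (In k J)) as [h|h].
  - clear -h Hpos. induction J as [|a J IH]; simpl in *; [contradiction|].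
    destruct h as [->|h]. pose proof (Hpos J). lra. pose proof (IH h). pose proof (Rabs_pos (g a)). lra.
  - rewrite Rabs_R0. apply Hpos.
Qed.
Section Psi.
Variable rho : R -> R.
Hypothesis Hrho : is_Kinf rho.

Definition psi (x : R) : R := Rmin (rho (x/2)) (x/2) / 2.

Lemma psi_le x : 0 <= x -> psi x <= x / 4.
Proof. intros. unfold psi. pose proof (Rmin_r (rho (x/2)) (x/2)). lra. Qed.

Lemma psi_le_rho x : 0 <= x -> psi x <= rho (x/2) / 2.
Proof. intros. unfold psi. pose proof (Rmin_l (rho (x/2)) (x/2)). lra. Qed.

Lemma psi_nonneg x : 0 <= x -> 0 <= psi x.
Proof.
  intros. unfold psi. assert (0 <= rho (x/2)) by (apply (K_nonneg rho (proj1 Hrho)); lra).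
  apply Rmin_case; lra.
Qed.

Lemma psi_pos x : 0 < x -> 0 < psi x.
Proof.
  intros. unfold psi. assert (0 < rho (x/2)) by (apply (K_pos rho (proj1 Hrho)); lra).
  apply Rmin_case; lra.
Qed.

Lemma psi_mono x y : 0 <= x -> x <= y -> psi x <= psi y.
Proof.
  intros. unfold psi. assert (rho (x/2) <= rho (y/2)) by (apply (K_mono rho (proj1 Hrho)); lra).
  assert (Rmin (rho (x/2)) (x/2) <= Rmin (rho (y/2)) (y/2)).
  { apply Rmin_glb. eapply Rle_trans; [apply Rmin_l|lra]. eapply Rle_trans; [apply Rmin_r|lra]. }
  lra.
Qed.

Lemma psi0 : psi 0 = 0.
Proof.
  unfold psi. replace (0/2) with 0 by lra. rewrite (K_zero rho (proj1 Hrho)).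
  rewrite Rmin_left; lra.
Qed.

Lemma lemA y x : 0 <= y -> y + rho y <= x -> y + rho y / 2 <= x - psi x.
Proof.
  intros Hy Hx. assert (0 <= rho y) by (apply (K_nonneg rho (proj1 Hrho)); lra).
  destruct (Rle_or_lt (x/2) y) as [h|h].
  - assert (rho (x/2) <= rho y) by (apply (K_mono rho (proj1 Hrho)); lra).
    pose proof (psi_le_rho x). lra.
  - pose proof (psi_le x). lra.
Qed.

Definition chiset (x : R) := fun y => exists z, 0 <= z <= x /\ y = psi z + (x - z).
Definition chi (x : R) : R := glb (chiset x).

Lemma chiset_lb x y : chiset x y -> 0 <= y.
Proof. intros [z [Hz ->]]. pose proof (psi_nonneg z). lra. Qed.

Lemma chiset_in x : 0 <= x -> chiset x (psi x).
Proof. intros. exists x. split; [lra| ring]. Qed.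

Lemma chi_le_psi x : 0 <= x -> chi x <= psi x.
Proof. intros. apply (glb_le _ 0); [apply chiset_lb| apply chiset_in; auto]. Qed.

Lemma chi_nonneg x : 0 <= x -> 0 <= chi x.
Proof. intros. apply (glb_ge _ _ (psi x)); [apply chiset_in; auto| apply chiset_lb]. Qed.

Lemma chi_pos x : 0 < x -> 0 < chi x.
Proof.
  intros Hx. apply Rlt_le_trans with (Rmin (psi (x/2)) (x/2)).
  { pose proof (psi_pos (x/2)). apply Rmin_case; lra. }
  apply (glb_ge _ _ (psi x)); [apply chiset_in; lra|].
  intros y [z [Hz ->]]. destruct (Rle_or_lt (x/2) z).
  - pose proof (psi_mono (x/2) z). pose proof (Rmin_l (psi (x/2)) (x/2)). lra.
  - pose proof (psi_nonneg z). pose proof (Rmin_r (psi (x/2)) (x/2)). lra.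
Qed.

Lemma chi_mono x1 x2 : 0 <= x1 -> x1 <= x2 -> chi x1 <= chi x2.
Proof.
  intros. apply (glb_ge _ _ (psi x2)); [apply chiset_in; lra|].
  intros y [z [Hz ->]]. destruct (Rle_or_lt z x1).
  - apply Rle_trans with (psi z + (x1 - z)); [|lra].
    apply (glb_le _ 0); [apply chiset_lb|]. exists z; split; [lra|ring].
  - apply Rle_trans with (psi x1); [apply chi_le_psi; lra|].
    pose proof (psi_mono x1 z). lra.
Qed.

Lemma chi_lip x1 x2 : 0 <= x1 -> x1 <= x2 -> chi x2 <= chi x1 + (x2 - x1).
Proof.
  intros. apply Rle_plus_epsilon. intros e He.
  destruct (glb_approx (chiset x1) 0 (psi x1) e) as [y [[z [Hz ->]] Hy]];
    [apply chiset_in; auto|apply chiset_lb|auto|].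
  fold (chi x1) in Hy.
  apply Rle_trans with (psi z + (x2 - z)); [|lra].
  apply (glb_le _ 0); [apply chiset_lb|]. exists z; split; [lra|ring].
Qed.

Lemma chi0 : chi 0 = 0.
Proof.
  apply Rle_antisym; [|apply chi_nonneg; lra].
  rewrite <- psi0 at 2. apply chi_le_psi; lra.
Qed.

End Psi.
Lemma bounded_vsub {I : Type} (s1 s2 : I -> R) : bounded_fam s1 -> bounded_fam s2 -> bounded_fam (vsub s1 s2).
Proof.
  intros [C1 H1] [C2 H2]. exists (C1 + C2). intro i. unfold vsub.
  eapply Rle_trans; [apply Rabs_triang|]. rewrite Rabs_Ropp. specialize (H1 i); specialize (H2 i); lra.
Qed.

Section Main.
Variable I : Type.
Variable sigma : R -> I -> R.
Variables rho phimin phimax : R -> R.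
Hypothesis Hrho : is_Kinf rho.
Hypothesis Hphimin : is_Kinf phimin.
Hypothesis Hphimax : is_Kinf phimax.
Hypothesis Hlinf : forall r, 0 <= r -> in_linf_plus (sigma r).
Hypothesis Hcont : forall r0, 0 <= r0 -> forall eps, 0 < eps -> exists delta, 0 < delta /\
       forall r, 0 <= r -> Rabs (r - r0) < delta ->
         linf_norm (vsub (sigma r) (sigma r0)) < eps.
Hypothesis Hmono : forall r1 r2, 0 <= r1 -> r1 <= r2 -> vle (sigma r1) (sigma r2).
Hypothesis Hbnd : forall r, 0 <= r -> forall i, phimin r <= sigma r i <= phimax r.

Lemma comp_close r s i : 0 <= r -> 0 <= s -> Rabs (sigma r i - sigma s i) <= linf_norm (vsub (sigma r) (sigma s)).
Proof.
  intros. apply (linf_norm_comp (vsub (sigma r) (sigma s))).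
  apply bounded_vsub; [apply Hlinf| apply Hlinf]; auto.
Qed.

Lemma UC a b eps : 0 < a -> 0 < eps -> exists delta, 0 < delta /\
  forall t, a <= t <= b -> forall r, t <= r <= t + delta -> forall i, sigma r i - sigma t i <= eps.
Proof.
  intros Ha He.
  assert (G : forall x, {d : R | 0 < d /\ (0 <= x -> forall r, 0 <= r -> Rabs (r - x) < d ->
       linf_norm (vsub (sigma r) (sigma x)) < eps/2)}).
  { intro x. apply constructive_indefinite_description. destruct (Rle_or_lt 0 x) as [h|h].
    - destruct (Hcont x h (eps/2)) as [d [Hd P]]; [lra|]. exists d; split; auto.
    - exists 1; split; [lra| intros; lra]. }
  assert (Gpos : forall x, 0 < proj1_sig (G x) / 2).
  { intro x. pose proof (proj1 (proj2_sig (G x))). lra. }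
  set (delta := fun x => mkposreal _ (Gpos x)).
  destruct (compactness_value_1d a b delta) as [d Hd].
  exists d. split; [apply cond_pos|]. intros t Ht r Hr i.
  apply Rnot_lt_le; intro Hlt. apply (Hd t Ht). intros [s [Hs [Hts Hds]]].
  unfold delta in Hts, Hds; simpl in Hts, Hds.
  pose proof (proj2_sig (G s)) as [Hg P]. set (g := proj1_sig (G s)) in *.
  assert (A1 : linf_norm (vsub (sigma r) (sigma s)) < eps/2).
  { apply P; try lra. pose proof (cond_pos d). 
    apply Rle_lt_trans with (Rabs (r - t) + Rabs (t - s)).
    replace (r - s) with ((r - t) + (t - s)) by ring. apply Rabs_triang.
    rewrite (Rabs_right (r - t)) by lra. lra. }
  assert (A2 : linf_norm (vsub (sigma t) (sigma s)) < eps/2).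
  { apply P; try lra. }
  pose proof (comp_close r s i) as C1. pose proof (comp_close t s i) as C2.
  assert (0 <= r) by lra. assert (0 <= t) by lra. assert (0 <= s) by lra.
  specialize (C1 H H1). specialize (C2 H0 H1).
  pose proof (Rle_abs (sigma r i - sigma s i)). pose proof (Rabs_Ropp (sigma t i - sigma s i)).
  pose proof (Rle_abs (- (sigma t i - sigma s i))). lra.
Qed.
Definition eps_n (n : nat) : R := psi rho (phimin (/ (INR n + 1))) / 2.

Lemma INR_Sn_pos n : 0 < INR n + 1.
Proof. pose proof (pos_INR n). lra. Qed.

Lemma eps_n_pos n : 0 < eps_n n.
Proof.
  unfold eps_n. assert (0 < / (INR n + 1)) by (apply Rinv_0_lt_compat, INR_Sn_pos).
  assert (0 < phimin (/ (INR n + 1))) by (apply (K_pos _ (proj1 Hphimin)); auto).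
  pose proof (psi_pos rho Hrho _ H0). lra.
Qed.

Lemma UCn n : exists d, 0 < d /\ forall t, / (INR n + 1) <= t <= INR n + 1 ->
  forall r, t <= r <= t + d -> forall i, sigma r i - sigma t i <= eps_n n.
Proof.
  apply UC. apply Rinv_0_lt_compat, INR_Sn_pos. apply eps_n_pos.
Qed.

Definition dseq (n : nat) : R := proj1_sig (constructive_indefinite_description _ (UCn n)).

Lemma dseq_spec n : 0 < dseq n /\ forall t, / (INR n + 1) <= t <= INR n + 1 ->
  forall r, t <= r <= t + dseq n -> forall i, sigma r i - sigma t i <= eps_n n.
Proof. unfold dseq. apply (proj2_sig (constructive_indefinite_description _ (UCn n))). Qed.

Fixpoint Dm (n : nat) : R := match n with 0 => Rmin (1/2) (dseq 0) | S k => Rmin (Dm k) (dseq (S k)) end.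

Lemma Dm_props n : 0 < Dm n /\ Dm n <= 1/2 /\ Dm n <= dseq n.
Proof.
  induction n as [|n IH]; simpl.
  - pose proof (proj1 (dseq_spec 0)). split; [apply Rmin_case; lra|]. split; [apply Rmin_l|apply Rmin_r].
  - pose proof (proj1 (dseq_spec (S n))). destruct IH as [A [B C]].
    split; [apply Rmin_case; lra|]. split; [eapply Rle_trans; [apply Rmin_l|lra]|apply Rmin_r].
Qed.

Lemma Dm_anti m n : (m <= n)%nat -> Dm n <= Dm m.
Proof.
  induction 1; [lra|]. simpl. eapply Rle_trans; [apply Rmin_l|auto].
Qed.

Lemma up_mono x y : x <= y -> (up x <= up y)%Z.
Proof.
  intros H. destruct (Z_le_gt_dec (up x) (up y)) as [h|h]; auto. exfalso.
  assert (h' : (up y + 1 <= up x)%Z) by lia. apply IZR_le in h'. rewrite plus_IZR in h'.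
  pose proof (archimed x) as [A B]. pose proof (archimed y) as [C D]. lra.
Qed.

Definition Nt (t : R) : nat := Z.to_nat (up (t + / t)).

Lemma Nt_ge t : 0 < t -> t + / t < INR (Nt t).
Proof.
  intros Ht. unfold Nt. pose proof (archimed (t + / t)) as [A _].
  assert (0 < / t) by (apply Rinv_0_lt_compat; auto).
  assert (0 <= up (t + / t))%Z. { apply le_IZR. lra. }
  rewrite INR_IZR_INZ, Z2Nat.id by auto. lra.
Qed.

Lemma Nt_prop t : 0 < t -> / (INR (Nt t) + 1) <= t <= INR (Nt t) + 1.
Proof.
  intros Ht. pose proof (Nt_ge t Ht). assert (0 < / t) by (apply Rinv_0_lt_compat; auto).
  split; [|lra].
  assert (/ (INR (Nt t) + 1) <= / / t) by (apply Rinv_le_contravar; [auto|lra]).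
  rewrite Rinv_inv in H1. exact H1.
Qed.

Lemma Nt_bound a b t : 0 < a -> a <= t <= b -> (Nt t <= Nt (b + / a))%nat.
Proof.
  intros Ha Ht. unfold Nt. 
  assert (/ t <= / a) by (apply Rinv_le_contravar; lra).
  assert (0 < / b) by (apply Rinv_0_lt_compat; lra).
  assert (b + / a <= (b + / a) + / (b + / a)).
  { assert (0 < / (b + / a)). apply Rinv_0_lt_compat. pose proof (Rinv_0_lt_compat a Ha). lra. lra. }
  destruct (Z_le_gt_dec 0 (up (t + / t))) as [h|h].
  - assert (U : (up (t + / t) <= up ((b + / a) + / (b + / a)))%Z) by (apply up_mono; lra).
    lia.
  - lia.
Qed.

Definition delta (t : R) : R := Dm (Nt t).

Lemma delta_pos t : 0 < delta t.
Proof. apply Dm_props. Qed.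
Lemma delta_half t : delta t <= 1/2.
Proof. apply Dm_props. Qed.

Lemma delta_unif t : 0 < t -> forall r, t <= r <= t + delta t -> forall i,
  sigma r i - sigma t i <= psi rho (phimin t) / 2.
Proof.
  intros Ht r Hr i. destruct (Dm_props (Nt t)) as [_ [_ C]]. destruct (dseq_spec (Nt t)) as [_ S].
  eapply Rle_trans. apply (S t (Nt_prop t Ht)). unfold delta in Hr. lra.
  unfold eps_n. apply Rmult_le_compat_r; [lra|]. apply psi_mono; auto.
  apply (K_nonneg _ (proj1 Hphimin)). left; apply Rinv_0_lt_compat, INR_Sn_pos.
  apply (K_mono _ (proj1 Hphimin)). left; apply Rinv_0_lt_compat, INR_Sn_pos. apply Nt_prop; auto.
Qed.

Lemma delta_lb a b : 0 < a -> exists c, 0 < c /\ forall t, a <= t <= b -> c <= delta t.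
Proof.
  intros Ha. exists (Dm (Nt (b + / a))). split; [apply Dm_props|].
  intros t Ht. apply Dm_anti. apply Nt_bound; auto.
Qed.
Definition Lt (t : R) : R := (phimax (t + 3) + 1) / delta t.

Lemma Lt_delta t : Lt t * delta t = phimax (t + 3) + 1.
Proof. unfold Lt. field. apply Rgt_not_eq, delta_pos. Qed.

Lemma phimax_nonneg x : 0 <= x -> 0 <= phimax x.
Proof. apply (K_nonneg _ (proj1 Hphimax)). Qed.

Lemma Lt_nonneg t : 0 <= t -> 0 <= Lt t.
Proof.
  intros. unfold Lt. pose proof (phimax_nonneg (t+3)). pose proof (delta_pos t).
  apply Rle_mult_inv_pos; lra.
Qed.

Lemma sig_nonneg r i : 0 <= r -> 0 <= sigma r i.
Proof. intros. apply (proj1 (Hlinf r H)). Qed.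

Lemma sig_le r1 r2 i : 0 <= r1 -> r1 <= r2 -> sigma r1 i <= sigma r2 i.
Proof. intros. apply Hmono; auto. Qed.

Definition ff (t r : R) (i : I) : R := sigma t i + Lt t * (r - t).

Definition wset (r : R) (i : I) := fun y => exists t, 0 < t <= r /\ r - 2 < t /\ y = ff t r i.
Definition w (r : R) (i : I) : R := glb (wset r i).

Lemma wset_lb r i y : wset r i y -> 0 <= y.
Proof.
  intros [t [Ht [_ ->]]]. unfold ff. pose proof (sig_nonneg t i). pose proof (Lt_nonneg t).
  assert (0 <= Lt t * (r - t)) by (apply Rmult_le_pos; lra). lra.
Qed.

Lemma wset_in r i : 0 < r -> wset r i (sigma r i).
Proof. intros. exists r. split; [lra|split; [lra|]]. unfold ff. ring. Qed.

Lemma w_le r i : 0 < r -> w r i <= sigma r i.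
Proof. intros. apply (glb_le _ 0); [apply wset_lb|apply wset_in; auto]. Qed.

Lemma w_nonneg_pos r i : 0 < r -> 0 <= w r i.
Proof. intros. apply (glb_ge _ _ (sigma r i)); [apply wset_in; auto|apply wset_lb]. Qed.

Lemma w_zero i : w 0 i = 0.
Proof.
  unfold w, glb. replace (Glb_Rbar (wset 0 i)) with p_infty; [reflexivity|].
  symmetry. apply is_glb_Rbar_unique. split.
  - intros x [t [Ht _]]. lra.
  - intros b _. destruct b; simpl; auto.
Qed.

Lemma sig_zero i : sigma 0 i = 0.
Proof.
  destruct (Hbnd 0 (Rle_refl 0) i). rewrite (K_zero _ (proj1 Hphimax)) in H0.
  rewrite (K_zero _ (proj1 Hphimin)) in H. lra.
Qed.

Lemma w_nonneg r i : 0 <= r -> 0 <= w r i.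
Proof.
  intros [h|h]. apply w_nonneg_pos; auto. subst. rewrite w_zero. lra.
Qed.

Lemma w_le0 r i : 0 <= r -> w r i <= sigma r i.
Proof.
  intros [h|h]. apply w_le; auto. subst. rewrite w_zero, sig_zero. lra.
Qed.

Lemma w_band r i : 0 <= r -> sigma r i - psi rho (sigma r i) / 2 <= w r i.
Proof.
  intros [Hr|Hr].
  2:{ subst. rewrite w_zero, sig_zero, (psi0 rho Hrho). lra. }
  apply (glb_ge _ _ (sigma r i)); [apply wset_in; auto|].
  intros y [t [Ht [Ht2 ->]]]. unfold ff.
  pose proof (sig_nonneg t i). pose proof (Lt_nonneg t). pose proof (sig_nonneg r i).
  pose proof (psi_nonneg rho Hrho (sigma r i)).
  destruct (Rle_or_lt (r - t) (delta t)) as [h|h].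
  - pose proof (delta_unif t (proj1 Ht) r ltac:(lra) i).
    assert (psi rho (phimin t) <= psi rho (sigma r i)).
    { apply psi_mono; auto. apply (K_nonneg _ (proj1 Hphimin)); lra.
      apply Rle_trans with (sigma t i). apply Hbnd; lra. apply sig_le; lra. }
    assert (0 <= Lt t * (r - t)) by (apply Rmult_le_pos; lra). lra.
  - assert (HH : Lt t * delta t <= Lt t * (r - t)) by (apply Rmult_le_compat_l; lra).
    rewrite Lt_delta in HH.
    assert (phimax r <= phimax (t + 3)) by (apply (K_mono _ (proj1 Hphimax)); lra).
    assert (sigma r i <= phimax r) by (apply Hbnd; lra). lra.
Qed.

Lemma w_mono r1 r2 i : 0 <= r1 -> r1 <= r2 -> w r1 i <= w r2 i.
Proof.
  intros [H1|H1] H12.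
  2:{ subst. rewrite w_zero. apply w_nonneg; auto. }
  apply (glb_ge _ _ (sigma r2 i)); [apply wset_in; lra|].
  intros y [t [Ht [Ht2 ->]]]. unfold ff.
  destruct (Rle_or_lt t r1) as [h|h].
  - apply Rle_trans with (ff t r1 i).
    + apply (glb_le _ 0); [apply wset_lb|]. exists t. split; [lra|split; [lra|auto]].
    + unfold ff. pose proof (Lt_nonneg t). assert (Lt t * (r1 - t) <= Lt t * (r2 - t)) by (apply Rmult_le_compat_l; lra). lra.
  - apply Rle_trans with (sigma r1 i). apply w_le; auto.
    pose proof (sig_le r1 t i). pose proof (Lt_nonneg t).
    assert (0 <= Lt t * (r2 - t)) by (apply Rmult_le_pos; lra). lra.
Qed.
Lemma w_lip a b : 0 < a -> a <= b -> exists K, 0 <= K /\ forall r1 r2 i, a <= r1 -> r1 <= r2 -> r2 <= b ->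
  w r2 i - w r1 i <= K * (r2 - r1).
Proof.
  intros Ha Hab. destruct (delta_lb (a/2) b) as [c [Hc Hcl]]; [lra|].
  pose proof (phimax_nonneg b ltac:(lra)) as Pb. pose proof (phimax_nonneg (b+3) ltac:(lra)) as Pb3.
  set (K1 := (phimax (b + 3) + 1) / c). set (K2 := (phimax b + 1) / (a/2)).
  assert (HK1 : 0 <= K1) by (apply Rle_mult_inv_pos; lra).
  assert (HK2 : 0 <= K2) by (apply Rle_mult_inv_pos; lra).
  exists (K1 + K2 + 2 * phimax b). split; [lra|].
  intros r1 r2 i H1 H12 H2.
  pose proof (w_nonneg r1 i ltac:(lra)). pose proof (w_le r2 i ltac:(lra)).
  assert (sigma r2 i <= phimax b).
  { apply Rle_trans with (phimax r2). apply Hbnd; lra. apply (K_mono _ (proj1 Hphimax)); lra. }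
  destruct (Rlt_or_le (1/2) (r2 - r1)) as [hD|hD].
  { assert (0 <= (K1 + K2) * (r2 - r1)) by (apply Rmult_le_pos; lra).
    assert (phimax b <= 2 * phimax b * (r2 - r1)) by nra. nra. }
  apply Rle_plus_epsilon. intros e He.
  set (eta := Rmin e 1). assert (0 < eta) by (unfold eta; apply Rmin_case; lra).
  assert (eta <= e) by apply Rmin_l. assert (eta <= 1) by apply Rmin_r.
  destruct (glb_approx (wset r1 i) 0 (sigma r1 i) eta) as [y [[t [Ht [Ht2 ->]]] Hy]];
    [apply wset_in; lra|apply wset_lb|auto|].
  fold (w r1 i) in Hy. unfold ff in Hy.
  pose proof (sig_nonneg t i ltac:(lra)). pose proof (Lt_nonneg t ltac:(lra)).
  pose proof (delta_half t).
  destruct (Rle_or_lt t (r2 - 2)) as [ht|ht].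
  - assert (HH : Lt t * delta t <= Lt t * (r1 - t)) by (apply Rmult_le_compat_l; lra).
    rewrite Lt_delta in HH.
    assert (phimax r2 <= phimax (t + 3)) by (apply (K_mono _ (proj1 Hphimax)); lra).
    assert (sigma r2 i <= phimax r2) by (apply Hbnd; lra).
    assert (0 <= (K1 + K2 + 2 * phimax b) * (r2 - r1)) by (apply Rmult_le_pos; lra). lra.
  - assert (Hw2 : w r2 i <= ff t r2 i).
    { apply (glb_le _ 0); [apply wset_lb|]. exists t. split; [lra|split; [lra|auto]]. }
    unfold ff in Hw2.
    assert (HL : Lt t <= K1 + K2).
    { destruct (Rle_or_lt (a/2) t) as [ha|ha].
      - assert (c <= delta t) by (apply Hcl; lra).
        assert (phimax (t+3) <= phimax (b+3)) by (apply (K_mono _ (proj1 Hphimax)); lra).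
        assert (Lt t <= K1).
        { unfold Lt, K1. pose proof (delta_pos t).
          apply Rle_trans with ((phimax (b + 3) + 1) / delta t).
          apply Rmult_le_compat_r; [left; apply Rinv_0_lt_compat; lra|lra].
          apply Rmult_le_compat_l; [lra|]. apply Rinv_le_contravar; lra. }
        lra.
      - assert (Lt t * (a/2) <= Lt t * (r1 - t)) by (apply Rmult_le_compat_l; lra).
        assert (w r1 i <= sigma r1 i) by (apply w_le; lra).
        assert (sigma r1 i <= phimax b).
        { apply Rle_trans with (phimax r1). apply Hbnd; lra. apply (K_mono _ (proj1 Hphimax)); lra. }
        assert (Lt t * (a/2) <= phimax b + 1) by lra.
        assert (Lt t <= K2).
        { unfold K2. apply Rmult_le_reg_r with (a/2); [lra|].
          replace ((phimax b + 1) / (a / 2) * (a / 2)) with (phimax b + 1) by (field; lra). lra. }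
        lra. }
    assert (Lt t * (r2 - r1) <= (K1 + K2 + 2 * phimax b) * (r2 - r1)) by (apply Rmult_le_compat_r; lra).
    replace (Lt t * (r2 - t)) with (Lt t * (r1 - t) + Lt t * (r2 - r1)) in Hw2 by ring.
    lra.
Qed.
Definition theta (r : R) : R := / (2 * (1 + r)).

Lemma theta_bnd r : 0 <= r -> 0 < theta r <= 1/2.
Proof.
  intros. unfold theta. split. apply Rinv_0_lt_compat; lra.
  replace (1/2) with (/ 2) by field. apply Rinv_le_contravar; lra.
Qed.

Lemma theta_diff r1 r2 : 0 <= r1 -> 0 <= r2 -> theta r1 - theta r2 = (r2 - r1) / (2 * (1 + r1) * (1 + r2)).
Proof. intros. unfold theta. field. lra. Qed.

Definition sig' (r : R) (i : I) : R := w r i - theta r * chi rho (w r i).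

Lemma chi_w_bnd r i : 0 <= r -> 0 <= chi rho (w r i) <= psi rho (sigma r i).
Proof.
  intros. pose proof (w_nonneg r i H). split. apply chi_nonneg; auto.
  eapply Rle_trans. apply chi_le_psi; auto. apply psi_mono; auto. apply w_le0; auto.
Qed.

Lemma sig'_le r i : 0 <= r -> sig' r i <= sigma r i.
Proof.
  intros. unfold sig'. pose proof (chi_w_bnd r i H). pose proof (theta_bnd r H). pose proof (w_le0 r i H).
  assert (0 <= theta r * chi rho (w r i)) by (apply Rmult_le_pos; lra). lra.
Qed.

Lemma sig'_band r i : 0 <= r -> sigma r i - psi rho (sigma r i) <= sig' r i.
Proof.
  intros. unfold sig'. pose proof (chi_w_bnd r i H). pose proof (theta_bnd r H). pose proof (w_band r i H).
  assert (theta r * chi rho (w r i) <= 1/2 * psi rho (sigma r i)) by (apply Rmult_le_compat; lra). lra.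
Qed.

Lemma sig'_ge r i : 0 <= r -> 3/4 * phimin r <= sig' r i.
Proof.
  intros. pose proof (sig'_band r i H). pose proof (psi_le rho (sigma r i) (sig_nonneg r i H)).
  pose proof (Hbnd r H i). lra.
Qed.

Lemma sig'_zero i : sig' 0 i = 0.
Proof. unfold sig'. rewrite w_zero, (chi0 rho Hrho). ring. Qed.

Lemma sig'_nonneg r i : 0 <= r -> 0 <= sig' r i.
Proof. intros. pose proof (sig'_ge r i H). pose proof (K_nonneg _ (proj1 Hphimin) r H). lra. Qed.

Lemma sig'_diff r1 r2 i : 0 <= r1 -> r1 <= r2 ->
  (theta r1 - theta r2) * chi rho (w r1 i) <= sig' r2 i - sig' r1 i <=
  (w r2 i - w r1 i) + (theta r1 - theta r2) * chi rho (w r1 i).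
Proof.
  intros. unfold sig'.
  pose proof (w_mono r1 r2 i H H0). pose proof (w_nonneg r1 i H).
  pose proof (chi_mono rho Hrho (w r1 i) (w r2 i) H2 H1).
  pose proof (chi_lip rho Hrho (w r1 i) (w r2 i) H2 H1).
  pose proof (theta_bnd r2 ltac:(lra)).
  assert (0 <= theta r2 * (chi rho (w r2 i) - chi rho (w r1 i)) <= 1/2 * (w r2 i - w r1 i)).
  { split. apply Rmult_le_pos; lra. apply Rmult_le_compat; lra. }
  lra.
Qed.

Lemma sig'_mono r1 r2 i : 0 <= r1 -> r1 <= r2 -> sig' r1 i <= sig' r2 i.
Proof.
  intros. pose proof (sig'_diff r1 r2 i H H0) as [A _].
  rewrite theta_diff in A by lra.
  assert (0 <= (r2 - r1) / (2 * (1 + r1) * (1 + r2)) * chi rho (w r1 i)).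
  { apply Rmult_le_pos. apply Rle_mult_inv_pos. lra. apply Rmult_lt_0_compat; lra.
    apply chi_nonneg, w_nonneg; auto. }
  lra.
Qed.

Lemma w_pos r i : 0 < r -> 0 < w r i.
Proof.
  intros. pose proof (w_band r i ltac:(lra)). pose proof (psi_le rho (sigma r i) (sig_nonneg r i ltac:(lra))).
  pose proof (Hbnd r ltac:(lra) i). pose proof (K_pos _ (proj1 Hphimin) r H). lra.
Qed.

Lemma sig'_lowslope a b : 0 < a -> a <= b -> exists k, 0 < k /\ forall r1 r2 i, a <= r1 -> r1 <= r2 -> r2 <= b ->
  k * (r2 - r1) <= sig' r2 i - sig' r1 i.
Proof.
  intros Ha Hab. set (m := 7/8 * phimin a).
  assert (Hm : 0 < m) by (unfold m; pose proof (K_pos _ (proj1 Hphimin) a Ha); lra).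
  pose proof (chi_pos rho Hrho m Hm) as Hc.
  exists (chi rho m / (2 * (1 + b) * (1 + b))). split.
  { apply Rdiv_lt_0_compat; [auto|]. apply Rmult_lt_0_compat; lra. }
  intros r1 r2 i H1 H12 H2. pose proof (sig'_diff r1 r2 i ltac:(lra) H12) as [A _].
  rewrite theta_diff in A by lra.
  assert (Cm : chi rho m <= chi rho (w r1 i)).
  { apply (chi_mono rho Hrho); [lra|]. pose proof (w_band r1 i ltac:(lra)).
    pose proof (psi_le rho (sigma r1 i) (sig_nonneg r1 i ltac:(lra))).
    pose proof (Hbnd r1 ltac:(lra) i). pose proof (K_mono _ (proj1 Hphimin) a r1 ltac:(lra) H1).
    unfold m. lra. }
  eapply Rle_trans; [|exact A].
  replace (chi rho m / (2 * (1 + b) * (1 + b)) * (r2 - r1)) with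
    ((r2 - r1) / (2 * (1 + b) * (1 + b)) * chi rho m) by (field; lra).
  apply Rmult_le_compat; try lra.
  - apply Rle_mult_inv_pos; [lra|]. apply Rmult_lt_0_compat; lra.
  - apply Rmult_le_compat_l; [lra|]. apply Rinv_le_contravar. apply Rmult_lt_0_compat; lra.
    apply Rmult_le_compat; lra.
Qed.

Lemma sig'_upslope a b : 0 < a -> a <= b -> exists K, 0 <= K /\ forall r1 r2 i, a <= r1 -> r1 <= r2 -> r2 <= b ->
  sig' r2 i - sig' r1 i <= K * (r2 - r1).
Proof.
  intros Ha Hab. destruct (w_lip a b Ha Hab) as [K [HK HKl]].
  pose proof (phimax_nonneg b ltac:(lra)).
  exists (K + phimax b). split; [lra|].
  intros r1 r2 i H1 H12 H2. pose proof (sig'_diff r1 r2 i ltac:(lra) H12) as [_ B].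
  pose proof (HKl r1 r2 i H1 H12 H2).
  rewrite theta_diff in B by lra.
  assert (C : chi rho (w r1 i) <= phimax b).
  { pose proof (chi_w_bnd r1 i ltac:(lra)). pose proof (psi_le rho (sigma r1 i) (sig_nonneg r1 i ltac:(lra))).
    pose proof (Hbnd r1 ltac:(lra) i). pose proof (K_mono _ (proj1 Hphimax) r1 b ltac:(lra) ltac:(lra)). lra. }
  assert ((r2 - r1) / (2 * (1 + r1) * (1 + r2)) <= (r2 - r1)).
  { unfold Rdiv. rewrite <- (Rmult_1_r (r2 - r1)) at 2. apply Rmult_le_compat_l; [lra|].
    assert (HD : 1 <= 2 * (1 + r1) * (1 + r2)) by (assert (0 <= r1 * r2) by (apply Rmult_le_pos; lra); nra).
    pose proof (Rinv_le_contravar 1 _ ltac:(lra) HD) as HI. rewrite Rinv_1 in HI. exact HI. }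
  assert ((r2 - r1) / (2 * (1 + r1) * (1 + r2)) * chi rho (w r1 i) <= (r2 - r1) * phimax b).
  { apply Rmult_le_compat; try lra. apply Rle_mult_inv_pos; [lra|]. apply Rmult_lt_0_compat; lra.
    apply (chi_nonneg rho Hrho), w_nonneg; lra. }
  lra.
Qed.
Lemma sig'_strict x y i : 0 <= x -> x < y -> sig' x i < sig' y i.
Proof.
  intros Hx Hxy. destruct Hx as [Hx|Hx].
  - destruct (sig'_lowslope x y Hx ltac:(lra)) as [k [Hk Hkl]].
    pose proof (Hkl x y i ltac:(lra) ltac:(lra) ltac:(lra)).
    assert (0 < k * (y - x)) by (apply Rmult_lt_0_compat; lra). lra.
  - subst. rewrite sig'_zero. pose proof (sig'_ge y i ltac:(lra)).
    pose proof (K_pos _ (proj1 Hphimin) y Hxy). lra.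
Qed.

Lemma phimax_small a : 0 < a -> exists d, 0 < d /\ forall y, 0 <= y -> y < d -> phimax y < a.
Proof.
  intros Ha. destruct (proj1 (proj1 Hphimax) 0 (Rle_refl 0) a Ha) as [d [Hd P]].
  exists d. split; auto. intros y Hy Hyd. specialize (P y Hy). rewrite Rminus_0_r, Rabs_right in P by lra.
  specialize (P Hyd). rewrite (K_zero _ (proj1 Hphimax)) in P. pose proof (Rle_abs (phimax y - 0)). lra.
Qed.

Lemma sig'_Kinf i : is_Kinf (fun r => sig' r i).
Proof.
  split; [split; [|split; [|split]]|].
  - intros x Hx eps He. destruct Hx as [Hx|Hx].
    + destruct (sig'_upslope (x/2) (x+1) ltac:(lra) ltac:(lra)) as [K [HK HKl]].
      assert (0 < eps / (K + 1)) by (apply Rdiv_lt_0_compat; lra).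
      exists (Rmin (Rmin (x/2) 1) (eps / (K + 1))). split.
      { repeat apply Rmin_case; lra. }
      intros y Hy Hyx. pose proof (Rmin_l (Rmin (x/2) 1) (eps / (K + 1))).
      pose proof (Rmin_r (Rmin (x/2) 1) (eps / (K + 1))). pose proof (Rmin_l (x/2) 1). pose proof (Rmin_r (x/2) 1).
      assert (KE : K * (eps / (K + 1)) < eps).
      { replace (K * (eps / (K + 1))) with (eps * (K / (K + 1))) by (field; lra).
        rewrite <- (Rmult_1_r eps) at 2. apply Rmult_lt_compat_l; [lra|].
        apply Rmult_lt_reg_r with (K + 1); [lra|]. replace (K / (K + 1) * (K + 1)) with K by (field; lra). lra. }
      destruct (Rle_or_lt x y) as [h|h].
      * rewrite Rabs_right in Hyx by lra. pose proof (HKl x y i ltac:(lra) h ltac:(lra)).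
        pose proof (sig'_mono x y i ltac:(lra) h).
        rewrite Rabs_right by lra.
        assert (K * (y - x) <= K * (eps / (K + 1))) by (apply Rmult_le_compat_l; lra). lra.
      * rewrite Rabs_left in Hyx by lra. pose proof (HKl y x i ltac:(lra) ltac:(lra) ltac:(lra)).
        pose proof (sig'_mono y x i ltac:(lra) ltac:(lra)).
        rewrite Rabs_left1 by lra.
        assert (K * (x - y) <= K * (eps / (K + 1))) by (apply Rmult_le_compat_l; lra). lra.
    + subst. destruct (phimax_small eps He) as [d [Hd P]]. exists d. split; auto.
      intros y Hy Hyd. rewrite sig'_zero, Rminus_0_r. rewrite Rminus_0_r, Rabs_right in Hyd by lra.
      pose proof (sig'_nonneg y i Hy). pose proof (sig'_le y i Hy). pose proof (Hbnd y Hy i).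
      pose proof (P y Hy Hyd). rewrite Rabs_right by lra. lra.
  - apply sig'_zero.
  - intros. apply sig'_nonneg; auto.
  - intros. apply sig'_strict; auto.
  - intros M. destruct (proj2 Hphimin (4/3 * M)) as [x [Hx Hm]]. exists x. split; auto.
    pose proof (sig'_ge x i Hx). lra.
Qed.

Lemma sig'_iv a b : 0 < a -> a <= b -> exists l L, 0 < l /\ l <= L /\
     forall i r1 r2 t1 t2, a <= r1 <= b -> a <= r2 <= b ->
       0 <= t1 -> 0 <= t2 -> sig' t1 i = r1 -> sig' t2 i = r2 ->
       l * Rabs (r1 - r2) <= Rabs (t1 - t2) <= L * Rabs (r1 - r2).
Proof.
  intros Ha Hab. destruct (phimax_small a Ha) as [d [Hd Pd]].
  destruct (proj2 Hphimin (4/3 * b)) as [x0 [Hx0 Hm0]].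
  set (T := Rmax x0 d).
  assert (Hrange : forall i t, 0 <= t -> a <= sig' t i <= b -> d <= t <= T).
  { intros i t Ht [H1 H2]. split.
    - apply Rnot_lt_le; intro h. pose proof (Pd t Ht h). pose proof (sig'_le t i Ht). pose proof (Hbnd t Ht i). lra.
    - apply Rle_trans with x0; [|apply Rmax_l]. apply Rnot_lt_le; intro h.
      pose proof (proj2 (proj2 (proj2 (proj1 Hphimin))) x0 t Hx0 h). pose proof (sig'_ge t i Ht). lra. }
  assert (HdT : d <= T) by apply Rmax_r.
  destruct (sig'_lowslope d T Hd HdT) as [k [Hk Hkl]].
  destruct (sig'_upslope d T Hd HdT) as [K [HK HKl]].
  assert (Ord : forall i t1 t2, d <= t1 -> t1 <= t2 -> t2 <= T ->
     k * (t2 - t1) <= sig' t2 i - sig' t1 i <= (K + k) * (t2 - t1)).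
  { intros i t1 t2 h1 h12 h2. split. apply Hkl; auto. pose proof (HKl t1 t2 i h1 h12 h2).
    assert (0 <= k * (t2 - t1)) by (apply Rmult_le_pos; lra). lra. }
  exists (/ (K + k)), (/ k). split; [apply Rinv_0_lt_compat; lra|]. split.
  { apply Rinv_le_contravar; lra. }
  intros i r1 r2 t1 t2 Hr1 Hr2 Ht1 Ht2 E1 E2.
  assert (R1 : d <= t1 <= T) by (apply (Hrange i); auto; rewrite E1; lra).
  assert (R2 : d <= t2 <= T) by (apply (Hrange i); auto; rewrite E2; lra).
  assert (Gen : forall u v, 0 <= v -> k * v <= u <= (K + k) * v -> / (K + k) * u <= v <= / k * u).
  { intros u v Hv [A B]. split.
    - apply Rmult_le_reg_l with (K + k); [lra|]. rewrite <- Rmult_assoc, Rinv_r by lra. lra.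
    - apply Rmult_le_reg_l with k; [lra|]. rewrite <- Rmult_assoc, Rinv_r by lra. lra. }
  destruct (Rle_or_lt t1 t2) as [h|h].
  - pose proof (Ord i t1 t2 (proj1 R1) h (proj2 R2)). subst r1 r2.
    rewrite (Rabs_minus_sym t1 t2), (Rabs_minus_sym (sig' t1 i)).
    rewrite (Rabs_right (t2 - t1)) by lra. rewrite (Rabs_right (sig' t2 i - sig' t1 i)).
    apply Gen; lra. assert (0 <= k * (t2 - t1)) by (apply Rmult_le_pos; lra). lra.
  - pose proof (Ord i t2 t1 (proj1 R2) ltac:(lra) (proj2 R1)). subst r1 r2.
    rewrite (Rabs_right (t1 - t2)) by lra. rewrite (Rabs_right (sig' t1 i - sig' t2 i)).
    apply Gen; lra. assert (0 <= k * (t1 - t2)) by (apply Rmult_le_pos; lra). lra.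
Qed.
Variable Ii : I -> list I.
Variable gam : I -> I -> R -> R.
Variable mu : I -> (I -> R) -> Rbar.
Hypothesis Hgod : gain_operator_data Ii gam mu.
Hypothesis Hdec : forall r, 0 <= r -> vle (Gamma_rho Ii gam mu rho (sigma r)) (sigma r).

Lemma gain_arg_linf i s : in_linf_plus s -> in_linf_plus (gain_arg Ii gam i s).
Proof.
  intros [Hs _]. destruct Hgod as [_ [HK _]]. split.
  - intro k. unfold gain_arg. destruct (excluded_middle_informative (In k (Ii i))) as [h|h].
    apply (K_nonneg _ (proj1 (HK i k h))); auto. right; reflexivity.
  - apply (fin_bounded (Ii i) (fun k => gam i k (s k))).
Qed.

Lemma Gamma_mono s1 s2 i : in_linf_plus s1 -> in_linf_plus s2 -> vle s1 s2 ->
  Gamma Ii gam mu s1 i <= Gamma Ii gam mu s2 i.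
Proof.
  intros H1 H2 H12. pose proof Hgod as [_ [HK [_ [_ [_ [HM2 [HM3 _]]]]]]].
  destruct (HM3 (Ii i) i) as [Hf _].
  assert (V : forall s, in_linf_plus s -> is_finite (mu i (gain_arg Ii gam i s))).
  { intros s Hs. apply Hf. split. apply gain_arg_linf; auto.
    intros k hk. unfold gain_arg. destruct (excluded_middle_informative (In k (Ii i))); [contradiction|auto]. }
  assert (L : Rbar_le (mu i (gain_arg Ii gam i s1)) (mu i (gain_arg Ii gam i s2))).
  { apply HM2; try apply gain_arg_linf; auto. intro k. unfold gain_arg.
    destruct (excluded_middle_informative (In k (Ii i))) as [h|h].
    apply (K_mono _ (proj1 (HK i k h))). apply (proj1 H1). apply H12. right; reflexivity. }
  unfold Gamma. rewrite <- (V s1 H1), <- (V s2 H2) in L. exact L.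
Qed.

Lemma Gamma_nonneg s i : in_linf_plus s -> 0 <= Gamma Ii gam mu s i.
Proof.
  intros Hs. pose proof Hgod as [_ [_ [_ [_ [_ [_ [_ [_ HG]]]]]]]]. apply (proj1 (HG s Hs)).
Qed.

Lemma sig'_linf r : 0 <= r -> in_linf_plus (sig' r).
Proof.
  intros Hr. split. intro i. apply sig'_nonneg; auto.
  destruct (proj2 (Hlinf r Hr)) as [C HC]. exists C. intro i.
  pose proof (sig'_nonneg r i Hr). pose proof (sig'_le r i Hr). specialize (HC i).
  pose proof (Rle_abs (sigma r i)). rewrite Rabs_right by lra. lra.
Qed.

Lemma sig'_decay r : 0 <= r -> vle (Gamma_rho Ii gam mu (fun x => rho x / 2) (sig' r)) (sig' r).
Proof.
  intros Hr i. unfold Gamma_rho.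
  set (y := Gamma Ii gam mu (sig' r) i). set (Y := Gamma Ii gam mu (sigma r) i).
  assert (Hy : 0 <= y) by (apply Gamma_nonneg, sig'_linf; auto).
  assert (HyY : y <= Y).
  { apply Gamma_mono; [apply sig'_linf; auto|apply Hlinf; auto|]. intro k. apply sig'_le; auto. }
  pose proof (Hdec r Hr i) as D. unfold Gamma_rho in D. fold Y in D.
  pose proof (lemA rho Hrho Y (sigma r i) ltac:(lra) D).
  pose proof (sig'_band r i Hr).
  assert (rho y <= rho Y) by (apply (K_mono _ (proj1 Hrho)); auto). lra.
Qed.

Lemma exists_path : exists sigma', path_of_strict_decay Ii gam mu sigma'.
Proof.
  exists sig'. split; [|split; [|split; [|split]]].
  - apply sig'_linf.
  - exists (fun x => rho x / 2). split.
    + replace (fun x => rho x / 2) with (fun x => /2 * rho x).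
      apply Kinf_scale; auto; lra. apply functional_extensionality; intro; unfold Rdiv; ring.
    + apply sig'_decay.
  - exists (fun r => 3/4 * phimin r), phimax. split; [apply Kinf_scale; auto; lra|]. split; auto.
    intros r Hr i. split. apply sig'_ge; auto. pose proof (sig'_le r i Hr). pose proof (Hbnd r Hr i). lra.
  - apply sig'_Kinf.
  - apply sig'_iv.
Qed.
End Main.

Theorem proposition2p9 :
  forall (I : Type) (Ii : I -> list I) (gam : I -> I -> R -> R)
    (mu : I -> (I -> R) -> Rbar),
  countable_nonempty I ->
  gain_operator_data Ii gam mu ->
  forall sigma : R -> I -> R,
    (forall r, 0 <= r -> in_linf_plus (sigma r)) ->
    (* continuous in norm on R_+ *)
    (forall r0, 0 <= r0 -> forall eps, 0 < eps -> exists delta, 0 < delta /\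
       forall r, 0 <= r -> Rabs (r - r0) < delta ->
         linf_norm (vsub (sigma r) (sigma r0)) < eps) ->
    (* increasing *)
    (forall r1 r2, 0 <= r1 -> r1 <= r2 -> vle (sigma r1) (sigma r2)) ->
    (* (i) *)
    (exists rho, is_Kinf rho /\
       forall r, 0 <= r -> vle (Gamma_rho Ii gam mu rho (sigma r)) (sigma r)) ->
    (* (ii) *)
    (exists phimin phimax, is_Kinf phimin /\ is_Kinf phimax /\
       forall r, 0 <= r -> forall i, phimin r <= sigma r i <= phimax r) ->
    exists sigma' : R -> I -> R, path_of_strict_decay Ii gam mu sigma'.
Proof.
  intros I Ii gam mu _ Hgod sigma Hlinf Hcont Hmono [rho [Hrho Hdec]] [phimin [phimax [Hmin [Hmax Hbnd]]]].
  exact (exists_path I sigma rho phimin phimax Hrho Hmin Hmax Hlinf Hcont Hmono Hbnd Ii gam mu Hgod Hdec).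
Qed.
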